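(* Suppose Assumptions (A2) and (A3) below hold and $x$ is such that $\mathtt{P}_{N_p}^{\mathrm{H}}(x)$ has a feasible solution for the tubes $\mathsf{Z}_k^j=\{z\mid T(z-\hat{z}_k^j)\leq \alpha_k^j\mathbf{1}\}$, $(j,k)\in I_{N_r:N_p-1}$. Then $\mathtt{P}_{N_p}^{\mathrm{H}}(x^+)$ is feasible for all $x^+\in \mathrm{conv}(\{A_i x+B_i u\})\oplus\mathsf W,\,\forall i\in\Gamma_p$, if the control input applied to the system follows the control policy $u=v+K_{\mathrm{inv}}(x-z)$.
   Context: Consider the uncertain linear system $x^+=Ax+Bu+w$ with $(A,B)\in\mathrm{conv}(\{(A_i,B_i),\,i\in\Gamma_p\})$, $\Gamma_p=\{1,\dots,n_p\}$, $w\in\mathsf W$ (convex polytope containing the origin in its interior), polytopic constraints $x\in\mathbb X$, $u\in\mathbb U$. The disturbance set is split as $\mathsf W\subseteq\overline{\mathsf W}\oplus\underline{\mathsf W}$ with $\overline{\mathsf W}=\mathrm{conv}\{w_l,\,l\in\Gamma_{\overline w}\}$ (large) and $\underline{\mathsf W}$ (small). Nominal model $z^+=A_iz+B_iv+w$, $w\in\overline{\mathsf W}$; control $u=v+K_{\mathrm{inv}}(x-z)$; $\mathsf S$ satisfies $(A_i+B_iK_{\mathrm{inv}})\mathsf S\oplus\underline{\mathsf W}\subseteq\mathsf S$; tightened sets $\mathbb Z=\mathbb X\ominus\mathsf S=\{z\mid Fz\le\mathbf 1\}$, $\mathbb V=\mathbb U\ominus K_{\mathrm{inv}}\mathsf S=\{v\mid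 Gv\le\mathbf 1\}$. The tube-enhanced multi-stage MPC problem uses a scenario tree with nodes $z_k^j$ and inputs $v_k^j$ ($I_{k_1:k_2}$ = tree indices at stages $k_1,\dots,k_2$), branching $z_{k+1}^c=A_iz_k^j+B_iv_k^j+w_l$ for all $i,l$ up to the robust horizon $N_r$ with $z_k^j\in\mathbb Z$, $v_k^j\in\mathbb V$, root constraint $x\in\{z_0^1\}\oplus\mathsf S$, and beyond $N_r$ tubes under the policy $v_k^j+K_{\mathrm{pred}}z$. $\mathtt{P}^{\mathrm H}_{N_p}(x)$ is its convex ''homothetic tube'' implementation: tubes $\mathsf Z_k^j=\{z\mid T(z-\hat z_k^j)\le\alpha_k^j\mathbf 1\}=\hat z_k^j\oplus\alpha_k^j\mathrm{conv}\{\vee_1,\dots,\vee_{n_v}\}$ with fixed $T$ ($\{z\mid Tz\le\mathbf 1\}$ $\lambda$-contractive with vertices $\vee_r$) and decision variables $\hat z_k^j$, $\alpha_k^j\ge0$; set inclusions are replaced via Farkas' lemma with offline nonnegative matrices ($P_iT=T(A_i+B_iK_{\mathrm{pred}})$, $P_xT=F$, $P_uT=GK_{\mathrm{pred}}$), giving $P_i(\alpha_k^j\mathbf 1+T\hat z_k^j)+TB_iv_k^j+Tw_l\le T\hat z_{k+1}^j+\alpha_{k+1}^j\mathbf 1$, $P_x(\alpha_k^j\mathbf 1+T\hat z_k^j)\le\mathbf 1$, $Gv_k^j+P_u(\alpha_k^j\mathbf 1+T\hat z_k^j)\le\mathbf 1$, terminal $P_i(\alpha_{N_p}^j\mathbf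 1+T\hat z_{N_p}^j)+Tw_l\le T\hat z_{N_p}^j+\alpha_{N_p}^j\mathbf 1$, and continuity at $N_r$; the worst-case tube stage cost is bounded through the tube vertices by slack variables $\gamma_k^j$. (A2) $\mathsf S$ is a convex compact disturbance invariant polytope with $\mathsf S\subset\mathbb X$, $K_{\mathrm{inv}}\mathsf S\subset\mathbb U$ ($\mathsf S=\{0\}$ if $\underline{\mathsf W}=\{0\}$). (A3) $\mathbb Z_f\subseteq\mathbb X\ominus\mathsf S$ is a robust positively invariant polytope containing the origin for the nominal model with $K_f=K_{\mathrm{pred}}$, $K_f\mathbb Z_f\subseteq\mathbb U\ominus K_{\mathrm{inv}}\mathsf S$, and for all tubes $\mathsf Z\subseteq\mathbb Z_f$, $(A_i+B_iK_f)\mathsf Z\oplus\overline{\mathsf W}\subseteq\mathsf Z^+\subseteq\mathbb Z_f$ for all $i$. *)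

(* Defs.v *)
From HB Require Import structures.
From mathcomp Require Import all_boot all_order all_algebra.
Set Implicit Arguments. Unset Strict Implicit. Unset Printing Implicit Defensive.
Import Order.TTheory GRing.Theory Num.Theory.
Local Open Scope ring_scope.

Section Defs.
Variable R : realFieldType.

Definition mxle p r (M N : 'M[R]_(p, r)) : Prop := forall i j, M i j <= N i j.

Definition ones p : 'cV[R]_p := const_mx 1.

Definition subs n (P Q : 'cV[R]_n -> Prop) : Prop := forall x, P x -> Q x.

Definition msum n (P Q : 'cV[R]_n -> Prop) (x : 'cV[R]_n) : Prop :=
  exists a b, P a /\ Q b /\ x = a + b.

Definition convhull n k (w : 'I_k -> 'cV[R]_n) (x : 'cV[R]_n) : Prop :=
  exists mu : 'I_k -> R, (forall l, 0 <= mu l) /\ \sum_l mu l = 1 /\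
    x = \sum_l mu l *: w l.

Definition bounded n (P : 'cV[R]_n -> Prop) : Prop :=
  exists M : R, forall x, P x -> forall i, `|x i 0| <= M.

Definition polytope n (P : 'cV[R]_n -> Prop) : Prop :=
  bounded P /\
  exists (r : nat) (H : 'M[R]_(r, n)) (h : 'cV[R]_r), forall x, P x <-> mxle (H *m x) h.

Definition origin_interior n (P : 'cV[R]_n -> Prop) : Prop :=
  exists eps : R, 0 < eps /\ forall x : 'cV[R]_n, (forall i, `|x i 0| < eps) -> P x.

Definition tube n q (T : 'M[R]_(q, n)) (zh : 'cV[R]_n) (al : R) (z : 'cV[R]_n) : Prop :=
  mxle (T *m (z - zh)) (al *: ones q).

(* Problem data: n states, m inputs, np vertex models, nw vertices of Wbar,
   q rows of T, nF rows of F (Z = {z | F z <= 1}), nG rows of G (V = {v | G v <= 1}). *)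
Record mpc_data (n m np nw q nF nG : nat) := MpcData {
  Am : 'I_np -> 'M[R]_n;
  Bm : 'I_np -> 'M[R]_(n, m);
  wv : 'I_nw -> 'cV[R]_n;
  Kinv : 'M[R]_(m, n);
  Kpred : 'M[R]_(m, n);
  Sset : 'cV[R]_n -> Prop;
  Fm : 'M[R]_(nF, n);
  Gm : 'M[R]_(nG, m);
  Tm : 'M[R]_(q, n);
  Pm : 'I_np -> 'M[R]_q;
  Px : 'M[R]_(nF, q);
  Pu : 'M[R]_(nG, q);
  Nr : nat;
  Np : nat
}.

Definition label np nw := ('I_np * 'I_nw)%type.

(* Scenario-tree nodes at stage k <= Nr are the
   label sequences s of length k (the path of branches (i,l) from the root
   [::]); child of s along (i,l) is rcons s (i,l).  For each leaf s (size Nr),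
   tubes (zh s k, al s k) for Nr <= k <= Np and tube inputs vt s k,
   Nr <= k < Np.  Cost/slack variables gamma are omitted (always feasible). *)
Definition PH_cons n m np nw q nF nG (d : mpc_data n m np nw q nF nG)
  (x : 'cV[R]_n)
  (z : seq (label np nw) -> 'cV[R]_n) (v : seq (label np nw) -> 'cV[R]_m)
  (zh : seq (label np nw) -> nat -> 'cV[R]_n) (al : seq (label np nw) -> nat -> R)
  (vt : seq (label np nw) -> nat -> 'cV[R]_m) : Prop :=
  let T := Tm d in
  let tb s k := al s k *: ones q + T *m zh s k in
  Sset d (x - z [::]) /\
  (forall s, (size s < Nr d)%N -> forall i l,
      z (rcons s (i, l)) = Am d i *m z s + Bm d i *m v s + wv d l) /\
  (forall s, (size s <= Nr d)%N -> mxle (Fm d *m z s) (ones nF)) /\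
  (forall s, (size s < Nr d)%N -> mxle (Gm d *m v s) (ones nG)) /\
  (forall s, size s = Nr d ->
    (forall k, (Nr d <= k <= Np d)%N -> 0 <= al s k) /\
    tube T (zh s (Nr d)) (al s (Nr d)) (z s) /\
    (* tube dynamics, state and input constraints (Farkas form) *)
    (forall k, (Nr d <= k < Np d)%N ->
       (forall i l, mxle (Pm d i *m tb s k + T *m (Bm d i *m vt s k) + T *m wv d l)
                         (T *m zh s k.+1 + al s k.+1 *: ones q)) /\
       mxle (Px d *m tb s k) (ones nF) /\
       mxle (Gm d *m vt s k + Pu d *m tb s k) (ones nG)) /\
    (* terminal constraints: terminal tube RPI under K_f = K_pred (v = 0)
       and satisfying state/input constraints *)
    (forall i l, mxle (Pm d i *m tb s (Np d) + T *m wv d l)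
                      (T *m zh s (Np d) + al s (Np d) *: ones q)) /\
    mxle (Px d *m tb s (Np d)) (ones nF) /\
    mxle (Pu d *m tb s (Np d)) (ones nG)).

Definition PH_feasible n m np nw q nF nG (d : mpc_data n m np nw q nF nG)
  (x : 'cV[R]_n) : Prop :=
  exists z v zh al vt, @PH_cons n m np nw q nF nG d x z v zh al vt.

End Defs.
Arguments ones {R} p.

(* Main.v *)
Require Import Defs.
From HB Require Import structures.
From mathcomp Require Import all_boot all_order all_algebra.
From mathcomp Require Import lra zify.
Import Order.TTheory GRing.Theory Num.Theory.
Set Implicit Arguments. Unset Strict Implicit. Unset Printing Implicit Defensive.
Local Open Scope ring_scope.

Definition csum (R : realFieldType) (I : finType) (c : I -> R) p r
  (f : I -> 'M[R]_(p,r)) := \sum_x c x *: f x.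

Lemma csum_le (R : realFieldType) (I : finType) (c : I -> R) p r
  (f g : I -> 'M[R]_(p,r)) : (forall x, 0 <= c x) ->
  (forall x, mxle (f x) (g x)) -> mxle (csum c f) (csum c g).
Proof.
move=> c0 H; rewrite /mxle => i j; rewrite /csum !summxE; apply: ler_sum => x _.
rewrite !mxE; have := H x i j; exact: ler_wpM2l.
Qed.

Lemma csumD (R : realFieldType) (I : finType) (c : I -> R) p r
  (f g : I -> 'M[R]_(p,r)) :
  csum c (fun x => f x + g x) = csum c f + csum c g.
Proof. by rewrite /csum -big_split; apply: eq_bigr => x _; rewrite scalerDr. Qed.

Lemma csumB (R : realFieldType) (I : finType) (c : I -> R) p r
  (f g : I -> 'M[R]_(p,r)) :
  csum c (fun x => f x - g x) = csum c f - csum c g.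
Proof.
rewrite /csum -sumrN -big_split; apply: eq_bigr => x _.
by rewrite scalerDr scalerN.
Qed.

Lemma csumMl (R : realFieldType) (I : finType) (c : I -> R) p r s
  (M : 'M[R]_(s,p)) (f : I -> 'M[R]_(p,r)) :
  M *m csum c f = csum c (fun x => M *m f x).
Proof.
rewrite /csum mulmx_sumr; apply: eq_bigr => x _; by rewrite scalemxAr.
Qed.

Lemma csum_const (R : realFieldType) (I : finType) (c : I -> R) p r
  (K : 'M[R]_(p,r)) : \sum_x c x = 1 -> csum c (fun _ => K) = K.
Proof. by move=> c1; rewrite /csum -scaler_suml c1 scale1r. Qed.

Lemma csum_scal (R : realFieldType) (I : finType) (c : I -> R) p r
  (a : I -> R) (K : 'M[R]_(p,r)) :
  (\sum_x c x * a x) *: K = csum c (fun x => a x *: K).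
Proof. by rewrite /csum scaler_suml; apply: eq_bigr => x _; rewrite scalerA. Qed.

Lemma mxle_mull (R : realFieldType) p r s (P : 'M[R]_(s,p)) (u v : 'M[R]_(p,r)) :
  (forall a b, 0 <= P a b) -> mxle u v -> mxle (P *m u) (P *m v).
Proof.
move=> P0 H; rewrite /mxle => i j; rewrite !mxE; apply: ler_sum => k _; exact: ler_wpM2l.
Qed.

Lemma mxle_add (R : realFieldType) p r (a b c e : 'M[R]_(p,r)) :
  mxle a b -> mxle c e -> mxle (a + c) (b + e).
Proof. rewrite /mxle => H1 H2 i j; rewrite !mxE; exact: lerD. Qed.

Lemma mxle_trans (R : realFieldType) p r (a b c : 'M[R]_(p,r)) :
  mxle a b -> mxle b c -> mxle a c.
Proof. rewrite /mxle => H1 H2 i j; apply: le_trans (H1 i j) (H2 i j). Qed.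

Lemma mxle_refl (R : realFieldType) p r (a : 'M[R]_(p,r)) : mxle a a.
Proof. by rewrite /mxle. Qed.

Lemma mxle_eq (R : realFieldType) p r (a b a' b' : 'M[R]_(p,r)) :
  a = a' -> b = b' -> mxle a' b' -> mxle a b.
Proof. by move=> -> ->. Qed.

Lemma tubeE (R : realFieldType) n q (T : 'M[R]_(q,n)) zh al z :
  tube T zh al z <-> mxle (T *m z) (al *: ones q + T *m zh).
Proof.
rewrite /tube /mxle mulmxBr; split=> H i j; move: (H i j); by rewrite !mxE lerBlDr.
Qed.

Lemma csum_fst (R : realFieldType) (I J : finType) (mu : I -> R) (nu : J -> R) p r
  (f : I -> 'M[R]_(p,r)) : \sum_l nu l = 1 ->
  csum (fun y : I * J => mu y.1 * nu y.2) (fun y => f y.1) = \sum_i mu i *: f i.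
Proof.
move=> nu1; rewrite /csum -(pair_bigA _ (fun i l => (mu i * nu l) *: f i)) /=.
apply: eq_bigr => i _; by rewrite -scaler_suml -mulr_sumr nu1 mulr1.
Qed.

Lemma csum_snd (R : realFieldType) (I J : finType) (mu : I -> R) (nu : J -> R) p r
  (f : J -> 'M[R]_(p,r)) : \sum_i mu i = 1 ->
  csum (fun y : I * J => mu y.1 * nu y.2) (fun y => f y.2) = \sum_l nu l *: f l.
Proof.
move=> mu1; rewrite /csum -(pair_bigA _ (fun i l => (mu i * nu l) *: f l)) /=.
under eq_bigr do under eq_bigr do rewrite -scalerA.
under eq_bigr do rewrite -scaler_sumr.
by rewrite -scaler_suml mu1 scale1r.
Qed.

Lemma id_root (R : realFieldType) n m (A : 'M[R]_n) (B : 'M[R]_(n,m)) K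
  (x z0 wl wu : 'cV[R]_n) (v0 : 'cV[R]_m) :
  (A *m x + B *m (v0 + K *m (x - z0))) + (wl + wu) - (A *m z0 + B *m v0 + wl)
  = (A + B *m K) *m (x - z0) + wu.
Proof.
rewrite mulmxDr mulmxDl !mulmxBr !mulmxA.
move: (A *m x) (A *m z0) (B *m v0) (B *m K *m x) (B *m K *m z0) wl wu.
move=> a1 a2 a3 a4 a5 a6 a7; apply/matrixP => i j; rewrite !mxE; lra.
Qed.

Lemma id_dyn (R : realFieldType) n m (A : 'M[R]_n) (B : 'M[R]_(n,m)) K
  (zt wl : 'cV[R]_n) (vt : 'cV[R]_m) :
  (A + B *m K) *m zt + B *m vt + wl = A *m zt + B *m (vt + K *m zt) + wl.
Proof.
rewrite mulmxDr mulmxDl !mulmxA.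
move: (A *m zt) (B *m vt) (B *m K *m zt) wl.
move=> a1 a2 a3 a4; apply/matrixP => i j; rewrite !mxE; lra.
Qed.
Theorem corollary2 (R : realFieldType) (n m np nw q nF nG : nat)
  (d : mpc_data R n m np nw q nF nG)
  (X : 'cV[R]_n -> Prop) (U : 'cV[R]_m -> Prop)
  (W Wund Zf : 'cV[R]_n -> Prop) :
  let A := Am d in let B := Bm d in let S := Sset d in
  let T := Tm d in let Wbar := convhull (wv d) in
  (* horizons: branching stages followed by tube stages *)
  (0 < Nr d < Np d)%N ->
  (* constraint and disturbance sets *)
  polytope X -> polytope U ->
  polytope W -> origin_interior W ->
  subs W (msum Wbar Wund) ->
  (* tube shape {z | T z <= 1}: a bounded polytope *)
  bounded (fun z => mxle (T *m z) (ones q)) ->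
  (* disturbance invariance of S *)
  (forall i s w, S s -> Wund w -> S ((A i + B i *m Kinv d) *m s + w)) ->
  (* tightened sets Z = X (-) S = {F z <= 1}, V = U (-) Kinv S = {G v <= 1} *)
  (forall z, mxle (Fm d *m z) (ones nF) <-> (forall s, S s -> X (z + s))) ->
  (forall u, mxle (Gm d *m u) (ones nG) <-> (forall s, S s -> U (u + Kinv d *m s))) ->
  (* offline Farkas matrices *)
  (forall i a b, 0 <= Pm d i a b) ->
  (forall i, Pm d i *m T = T *m (A i + B i *m Kpred d)) ->
  (forall a b, 0 <= Px d a b) -> Px d *m T = Fm d ->
  (forall a b, 0 <= Pu d a b) -> Pu d *m T = Gm d *m Kpred d ->
  (* (A2) *)
  polytope S -> subs S X -> subs (fun u => exists s, S s /\ u = Kinv d *m s) U ->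
  ((forall w, Wund w <-> w = 0) -> (forall s, S s <-> s = 0)) ->
  (* (A3) *)
  polytope Zf -> Zf 0 ->
  subs Zf (fun z => mxle (Fm d *m z) (ones nF)) ->
  (forall z i w, Zf z -> Wbar w -> Zf ((A i + B i *m Kpred d) *m z + w)) ->
  (forall z, Zf z -> mxle (Gm d *m (Kpred d *m z)) (ones nG)) ->
  (forall zh al, 0 <= al -> subs (tube T zh al) Zf ->
     exists zh' al', 0 <= al' /\
       (forall i z w, tube T zh al z -> Wbar w ->
          tube T zh' al' ((A i + B i *m Kpred d) *m z + w)) /\
       subs (tube T zh' al') Zf) ->
  (* recursive feasibility *)
  forall (x : 'cV[R]_n) z v zh al vt,
  PH_cons d x z v zh al vt ->
  let u := v [::] + Kinv d *m (x - z [::]) in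
  forall xp : 'cV[R]_n,
  msum (convhull (fun i => A i *m x + B i *m u)) W xp ->
  PH_feasible d xp.
Proof.
move=> A B S T Wbar /andP[Nr0 NrNp] hX hU hW hWi hWs hTb hSinv hZ hV hP0 hPT
  hPx0 hPxT hPu0 hPuT hS hSX hSU hS0 hZf hZf0 hZfs hZfi hZfG hZft
  x z v zh al vt Hc u xp Hxp.
subst A B S T Wbar u.
clear hX hU hW hWi hTb hZ hV hSX hSU hS0 hZf hZf0 hZfs hZfi hZfG hZft.
move: Hc; rewrite /PH_cons => -[Hroot [Hdyn [HZ [HV Hleaf]]]].
case: Hxp => a [b [[mu [mu0 [mu1 Ea]]] [Wb Exp]]].
case: (hWs b Wb) => wb [wu [[nu [nu0 [nu1 Ewb]]] [Wu Eb]]].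
subst xp a b wb.
pose c := fun y : label np nw => mu y.1 * nu y.2.
have c0 : forall y, 0 <= c y by move=> y; apply: mulr_ge0.
have c1 : \sum_y c y = 1.
  rewrite /c -(pair_bigA _ (fun i l => mu i * nu l)) /=.
  under eq_bigr do rewrite -mulr_sumr nu1 mulr1.
  exact: mu1.
have cc : forall p r (K : 'M[R]_(p,r)), csum c (fun _ => K) = K.
  by move=> p r K; apply: csum_const.
pose Ze := fun (y : label np nw) (s : seq (label np nw)) =>
  if (size s < (Nr d))%N then z (y :: s) else
  (Am d (last y s).1 + Bm d (last y s).1 *m Kpred d) *m z (belast y s)
  + Bm d (last y s).1 *m vt (belast y s) (Nr d) + wv d (last y s).2.
pose Ve := fun (y : label np nw) (s : seq (label np nw)) =>
  if (size s < (Nr d).-1)%N then v (y :: s) else vt (y :: s) (Nr d) + Kpred d *m z (y :: s).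
pose M := fun k => minn k.+1 (Np d).
pose vte := fun t k => if (k.+1 < (Np d))%N then vt t k.+1 else 0.
have MN : M (Nr d) = (Nr d).+1 by rewrite /M; lia.
have MNP : M (Np d) = (Np d) by rewrite /M; lia.
have Ext : forall t, size t = (Nr d) -> forall k, ((Nr d) <= k < (Np d))%N ->
  [/\ forall i l, mxle (Pm d i *m (al t (M k) *: ones q + Tm d *m zh t (M k))
          + Tm d *m (Bm d i *m vte t k) + Tm d *m wv d l)
          (Tm d *m zh t (M k.+1) + al t (M k.+1) *: ones q),
      mxle (Px d *m (al t (M k) *: ones q + Tm d *m zh t (M k))) (ones nF) &
      mxle (Gm d *m vte t k + Pu d *m (al t (M k) *: ones q + Tm d *m zh t (M k)))
        (ones nG)].
  move=> t st k /andP[k1 k2]; case: (Hleaf t st) => al0 [cont [dyn [term [termx termu]]]].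
  rewrite /vte /M; case: ltnP => hk.
    have e2 : minn k.+2 (Np d) = k.+2 by lia.
    rewrite ?e2.
    case: (dyn k.+1); first by apply/andP; split => //; lia.
    by move=> D1 [D2 D3]; split.
  have e1 : minn k.+1 (Np d) = (Np d) by lia.
  have e2 : minn k.+2 (Np d) = (Np d) by lia.
  rewrite ?e1 ?e2.
  split; [move=> i l; rewrite !mulmx0 addr0; exact: term | exact: termx | rewrite mulmx0 add0r; exact: termu].
have Tn : forall t, size t = (Nr d) -> forall i l,
  mxle (Tm d *m ((Am d i + Bm d i *m Kpred d) *m z t + Bm d i *m vt t (Nr d) + wv d l))
       (al t (Nr d).+1 *: ones q + Tm d *m zh t (Nr d).+1).
  move=> t st i l; case: (Hleaf t st) => al0 [cont [dyn _]].
  case: (dyn (Nr d)); first by apply/andP; split => //.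
  move=> D1 _.
  rewrite !mulmxDr mulmxA -hPT -mulmxA.
  apply: (@mxle_trans _ _ _ _ (Pm d i *m (al t (Nr d) *: ones q + Tm d *m zh t (Nr d))
     + Tm d *m (Bm d i *m vt t (Nr d)) + Tm d *m wv d l)).
    apply: mxle_add; last exact: mxle_refl.
    apply: mxle_add; last exact: mxle_refl.
    by apply: mxle_mull => //; apply/tubeE.
  rewrite [X in mxle _ X]addrC; exact: D1.
have TB : forall s k,
  (\sum_y c y * al (belast y s) (M k)) *: ones q
    + Tm d *m csum c (fun y => zh (belast y s) (M k))
  = csum c (fun y => al (belast y s) (M k) *: ones q + Tm d *m zh (belast y s) (M k)).
  by move=> s k; rewrite csumD csum_scal csumMl.
exists (fun s => csum c (fun y => Ze y s)), (fun s => csum c (fun y => Ve y s)),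
  (fun s k => csum c (fun y => zh (belast y s) (M k))),
  (fun s k => \sum_y c y * al (belast y s) (M k)),
  (fun s k => csum c (fun y => vte (belast y s) k)).
split; [|split; [|split; [|split]]].
- case: hS => _ [r [H [h HS]]].
  rewrite -(@csum_fst _ _ _ mu nu _ _ (fun i => Am d i *m x + Bm d i *m (v [::] + Kinv d *m (x - z [::]))) nu1).
  rewrite -(@csum_snd _ _ _ mu nu _ _ (wv d) mu1) -[wu](cc _ _ wu) -!csumD -csumB.
  apply/HS; rewrite csumMl -(cc _ _ h); apply: csum_le c0 _ => y; apply/HS.
  rewrite /Ze /= Nr0; case: y => i l /=.
  rewrite (Hdyn [::] Nr0 i l) id_root; exact: hSinv.
- move=> s hs i l.
  have -> : csum c (fun y => Ze y (rcons s (i, l))) = csum c (fun y =>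
      Am d i *m Ze y s + Bm d i *m Ve y s + wv d l).
    apply: eq_bigr => y _; congr (_ *: _).
    rewrite /Ze /Ve /= size_rcons.
    case: (ltnP (size s).+1 (Nr d)) => h1.
      have h2 : (size s < (Nr d))%N by lia.
      have h3 : (size s < (Nr d).-1)%N by lia.
      rewrite h2 h3 -rcons_cons; apply: Hdyn => /=; exact: h1.
    have h2 : (size s < (Nr d))%N by exact: hs.
    have h3 : (size s < (Nr d).-1)%N = false by lia.
    rewrite h2 h3 last_rcons belast_rcons /=; exact: id_dyn.
  by rewrite !csumD -!csumMl cc.
- move=> s; move=> hs; rewrite csumMl -(cc _ _ (ones nF)); apply: csum_le c0 _ => y.
  rewrite /Ze /=; case: ltnP => h.
    by apply: HZ.
  have st : size (belast y s) = (Nr d).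
    by rewrite size_belast; apply/eqP; rewrite eqn_leq hs h.
  rewrite -hPxT -mulmxA.
  apply: mxle_trans (mxle_mull hPx0 (Tn _ st _ _)) _.
  case: (Ext _ st (Nr d)); first by apply/andP; split.
  by rewrite MN => _ E2 _.
- move=> s; move=> hs; rewrite csumMl -(cc _ _ (ones nG)); apply: csum_le c0 _ => y.
  rewrite /Ve /=; case: ltnP => h.
    apply: HV => /=; lia.
  have st : size (y :: s) = (Nr d).
    by apply/eqP; rewrite /= eqn_leq hs -(prednK Nr0) ltnS h.
  case: (Hleaf _ st) => _ [cont [dyn _]].
  case: (dyn (Nr d)); first by apply/andP; split.
  move=> _ [_ D3].
  rewrite mulmxDr mulmxA -hPuT -mulmxA.
  apply: mxle_trans D3.
  apply: mxle_add; first exact: mxle_refl.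
  by apply: mxle_mull => //; apply/tubeE.
- move=> s hs.
  have bs : forall y, size (belast y s) = Nr d by move=> y; rewrite size_belast.
  split; [|split; [|split; [|split; [|split]]]].
  + move=> k hk; apply: sumr_ge0 => y _; apply: mulr_ge0 => //.
    case: (Hleaf _ (bs y)) => al0 _; apply: al0; rewrite /M; lia.
  + apply/tubeE; rewrite TB csumMl; apply: csum_le c0 _ => y.
    rewrite MN /Ze /= hs ltnn /=; exact: Tn.
  + move=> k hk; split; [move=> i l|split].
    * rewrite TB (@csumMl _ _ c _ _ _ (Bm d i)) !csumMl csum_scal -(cc _ _ (Tm d *m wv d l)) -!csumD.
      apply: csum_le c0 _ => y; case: (Ext _ (bs y) k hk) => E1 _ _; exact: E1.
    * rewrite TB csumMl -(cc _ _ (ones nF)); apply: csum_le c0 _ => y.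
      by case: (Ext _ (bs y) k hk).
    * rewrite TB !csumMl -csumD -(cc _ _ (ones nG)); apply: csum_le c0 _ => y.
      by case: (Ext _ (bs y) k hk).
  + move=> i l.
    rewrite TB !csumMl csum_scal -(cc _ _ (Tm d *m wv d l)) -!csumD.
    apply: csum_le c0 _ => y; rewrite /= MNP.
    by case: (Hleaf _ (bs y)) => _ [_ [_ [term _]]].
  + rewrite TB csumMl -(cc _ _ (ones nF)); apply: csum_le c0 _ => y; rewrite /= MNP.
    by case: (Hleaf _ (bs y)) => _ [_ [_ [_ [termx _]]]].
  + rewrite TB csumMl -(cc _ _ (ones nG)); apply: csum_le c0 _ => y; rewrite /= MNP.
    by case: (Hleaf _ (bs y)) => _ [_ [_ [_ [_ termu]]]].
Qed.
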